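(* Let $n\equiv 3\pmod 4$. Then $\{y_1,\ldots,y_n\}$ is a generating set of $\mathcal{AM}_n$ of minimum size. In particular, $\mathcal{AM}_n$ has rank $n$.
   Context: Let $\Omega_n=\{1<2<\cdots<n\}$ and $\mathcal{I}_n$ the monoid of all partial injective maps of $\Omega_n$, written on the right and composed left to right. $\mathcal{AI}_n$ is the set of all $\alpha\in\mathcal{I}_n$ with $\alpha=\sigma|_{\mathrm{Dom}(\alpha)}$ for some even permutation $\sigma$; $\mathcal{PMI}_n$ is the set of monotone (order-preserving or order-reversing) elements and $\mathcal{AM}_n=\mathcal{AI}_n\cap\mathcal{PMI}_n$. The rank of a monoid is the minimum size of a generating set. Let $X_i=\Omega_n\setminus\{i\}$. For $1\leqslant i\leqslant n-1$, $y_i$ is the unique order-reversing partial permutation with domain $X_i$ and image $X_{i+1}$, and $y_n$ is the unique order-preserving partial permutation with domain $X_n$ and image $X_1$. *)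

(* Defs.v *)
From mathcomp Require Import all_boot all_fingroup.
Set Implicit Arguments. Unset Strict Implicit. Unset Printing Implicit Defensive.

(* Omega_n = {1 < ... < n} is modelled by 'I_n = {0 < ... < n-1}
   (point i of the paper is the ordinal with value i-1). *)

Definition PT (n : nat) := {ffun 'I_n -> option 'I_n}.

(* Composition written on the right, left to right: x (a b) = (x a) b. *)
Definition pcomp n (a b : PT n) : PT n := [ffun x => obind b (a x)].
Definition pid n : PT n := [ffun x => Some x].

Definition pprod n (s : seq (PT n)) : PT n := foldl (@pcomp n) (pid n) s.

Definition pinj n (a : PT n) : bool :=
  [forall x, forall y, (a x != None) ==> (a x == a y) ==> (x == y)].

Definition even_restr n (a : PT n) : bool :=
  [exists s : {perm 'I_n}, ~~ odd_perm s &&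
     [forall x, (a x == None) || (a x == Some (s x))]].

Definition order_preserving n (a : PT n) : bool :=
  [forall x, forall y,
     if (a x, a y) is (Some u, Some v) then (val x < val y) ==> (val u < val v)
     else true].

Definition order_reversing n (a : PT n) : bool :=
  [forall x, forall y,
     if (a x, a y) is (Some u, Some v) then (val x < val y) ==> (val v < val u)
     else true].

Definition In_ n : {set PT n} := [set a | pinj a].
Definition AI n : {set PT n} := [set a in In_ n | even_restr a].
Definition PMI n : {set PT n} :=
  [set a in In_ n | order_preserving a || order_reversing a].
Definition AM n : {set PT n} := AI n :&: PMI n.

Definition generated n (S : {set PT n}) (a : PT n) : Prop :=
  exists s : seq (PT n), all (fun b => b \in S) s /\ a = pprod s.

Definition generates n (S M : {set PT n}) : Prop :=
  S \subset M /\ forall a, a \in M <-> generated S a.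

(* The order-preserving (rev = false) / order-reversing (rev = true)
   bijection from A onto B (A, B of equal size): the k-th smallest element
   of A goes to the k-th smallest (resp. largest) element of B.
   (enum of a set of 'I_n lists it in increasing order.) *)
Definition mono_map n (A B : {set 'I_n}) (rev_ : bool) : PT n :=
  [ffun x => if x \in A then
       Some (nth x (if rev_ then rev (enum B) else enum B) (index x (enum A)))
     else None].

Definition Xs n (j : nat) : {set 'I_n} := [set x : 'I_n | val x != j].

(* y_(k+1) of the paper, for k < n (0-based index k):
   k+1 < n : order-reversing, domain X_(k+1), image X_(k+2);
   k+1 = n : order-preserving, domain X_n, image X_1. *)
Definition ygen n (k : nat) : PT n :=
  if k.+1 < n then mono_map (Xs n k) (Xs n k.+1) true
  else mono_map (Xs n k) (Xs n 0) false.

Definition Ygens n : {set PT n} := [set ygen n (val k) | k : 'I_n].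

(* Main.v *)
Require Import Defs.
From mathcomp Require Import all_boot all_fingroup zify.
Set Implicit Arguments. Unset Strict Implicit. Unset Printing Implicit Defensive.

Section S.
Variable m : nat.
Local Notation n := m.+1.
Implicit Types (a b : PT n).

Ltac nd := intros; match goal with H : None = Some _ |- _ => discriminate H end.

Definition ltO (x y : 'I_n) := val x < val y.

Lemma ltO_trans : transitive ltO.
Proof. by move=> x y z; rewrite /ltO; apply: ltn_trans. Qed.

Lemma sorted_enumI (D : {set 'I_n}) : sorted ltO (enum D).
Proof.
rewrite /enum_mem. apply: sorted_filter; first exact: ltO_trans.
rewrite -enumT. have := iota_ltn_sorted 0 n. by rewrite -val_enum_ord sorted_map.
Qed.

Lemma eq_enum_sorted (D : {set 'I_n}) s : sorted ltO s -> s =i D -> s = enum D.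
Proof.
move=> ss sD; apply: (irr_sorted_eq (leT := ltO)).
- exact: ltO_trans.
- by move=> x; rewrite /ltO ltnn.
- exact ss.
- exact: sorted_enumI.
- by move=> x; rewrite sD mem_enum.
Qed.

Definition dom a : {set 'I_n} := [set x | a x != None].
Definition img a : {set 'I_n} := [set y | [exists x, a x == Some y]].
Definition typ (t : bool) a := if t then order_reversing a else order_preserving a.

Lemma inj_elim a x y u : pinj a -> a x = Some u -> a y = Some u -> x = y.
Proof.
move=> /forallP/(_ x)/forallP/(_ y) h ax ay; apply/eqP.
by move: h; rewrite ax ay eqxx.
Qed.

Lemma inj_intro a : (forall x y u, a x = Some u -> a y = Some u -> x = y) -> pinj a.
Proof.
move=> h; apply/forallP=> x; apply/forallP=> y; apply/implyP=> ax; apply/implyP=> /eqP e.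
case ex: (a x) ax => [u|] // _; apply/eqP; apply: (h _ _ u ex); by rewrite -e.
Qed.

Lemma op_elim a x y u v : order_preserving a -> a x = Some u -> a y = Some v ->
  val x < val y -> val u < val v.
Proof.
move=> /forallP/(_ x)/forallP/(_ y) h ax ay; by move: h; rewrite ax ay => /implyP.
Qed.

Lemma or_elim a x y u v : order_reversing a -> a x = Some u -> a y = Some v ->
  val x < val y -> val v < val u.
Proof.
move=> /forallP/(_ x)/forallP/(_ y) h ax ay; by move: h; rewrite ax ay => /implyP.
Qed.

Lemma op_intro a : (forall x y u v, a x = Some u -> a y = Some v ->
  val x < val y -> val u < val v) -> order_preserving a.
Proof.
move=> h; apply/forallP=> x; apply/forallP=> y.
case ex: (a x) => [u|] //; case ey: (a y) => [v|] //; apply/implyP; exact: h.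
Qed.

Lemma or_intro a : (forall x y u v, a x = Some u -> a y = Some v ->
  val x < val y -> val v < val u) -> order_reversing a.
Proof.
move=> h; apply/forallP=> x; apply/forallP=> y.
case ex: (a x) => [u|] //; case ey: (a y) => [v|] //; apply/implyP; exact: h.
Qed.

Lemma in_dom a x : (x \in dom a) = (a x != None).
Proof. by rewrite inE. Qed.

Lemma in_img a y : (y \in img a) = [exists x, a x == Some y].
Proof. by rewrite inE. Qed.

Lemma imgP a y : reflect (exists x, a x = Some y) (y \in img a).
Proof.
rewrite in_img; apply: (iffP existsP) => [[x /eqP]|[x e]]; exists x => //; exact/eqP.
Qed.

Lemma char a t : pinj a -> typ t a -> a = mono_map (dom a) (img a) t.
Proof.
move=> ia ta.
pose f x := odflt x (a x).
have fD x : x \in dom a -> a x = Some (f x).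
  by rewrite in_dom /f; case: (a x).
have key : map f (enum (dom a)) = if t then rev (enum (img a)) else enum (img a).
  have memk : map f (enum (dom a)) =i img a.
    move=> y; apply/mapP/imgP => [[x]|[x ax]].
      rewrite mem_enum => xD ->; exists x; exact: fD.
    have xD : x \in dom a by rewrite in_dom ax.
    exists x; first by rewrite mem_enum.
    by move: (fD x xD); rewrite ax => -[].
  have alls : all (mem (dom a)) (enum (dom a)) by apply/allP=> x; rewrite mem_enum.
  case: t ta => ta.
  - rewrite -[map _ _]revK; congr rev; apply: eq_enum_sorted; last first.
      by move=> y; rewrite mem_rev memk.
    rewrite rev_sorted sorted_map.
    apply: (sub_in_sorted (P := mem (dom a)) (e := ltO)) => //; last exact: sorted_enumI.
    move=> x y xD yD; rewrite /ltO /relpre /= => lxy.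
    exact: (or_elim ta (fD _ xD) (fD _ yD) lxy).
  - apply: eq_enum_sorted; last exact: memk.
    rewrite sorted_map.
    apply: (sub_in_sorted (P := mem (dom a)) (e := ltO)) => //; last exact: sorted_enumI.
    move=> x y xD yD; rewrite /ltO /relpre /= => lxy.
    exact: (op_elim ta (fD _ xD) (fD _ yD) lxy).
apply/ffunP=> x; rewrite ffunE.
case: ifP => xD.
  rewrite -key (nth_map x) ?index_mem ?mem_enum // nth_index ?mem_enum //; exact: fD.
by apply/eqP; move: xD; rewrite in_dom => /negbT; rewrite negbK.
Qed.

Lemma card_dom_img a : pinj a -> #|dom a| = #|img a|.
Proof.
move=> ia.
pose f x := odflt x (a x).
have fD x : x \in dom a -> a x = Some (f x).
  by rewrite in_dom /f; case: (a x).
have -> : img a = f @: dom a.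
  apply/setP=> y; apply/imgP/imsetP => [[x ax]|[x xD ->]].
    have xD : x \in dom a by rewrite in_dom ax.
    by exists x => //; move: (fD x xD); rewrite ax => -[].
  by exists x; exact: fD.
rewrite card_in_imset // => x y xD yD e.
apply: (inj_elim ia (fD _ xD)); rewrite e; exact: fD.
Qed.


Lemma pcompE a b x : Defs.pcomp a b x = obind b (a x).
Proof. by rewrite /Defs.pcomp ffunE. Qed.

Lemma pcomp_Some a b x u : Defs.pcomp a b x = Some u -> exists2 p, a x = Some p & b p = Some u.
Proof. rewrite pcompE; case: (a x) => [p|] //= e; by exists p. Qed.

Lemma pinj_comp a b : pinj a -> pinj b -> pinj (Defs.pcomp a b).
Proof.
move=> ia ib; apply: inj_intro => x y u /pcomp_Some[p ap bp] /pcomp_Some[q aq bq].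
have pq : p = q by apply: (inj_elim ib bp bq).
by subst q; apply: (inj_elim ia ap aq).
Qed.

Lemma typ_comp t1 t2 a b : typ t1 a -> typ t2 b -> typ (t1 (+) t2) (Defs.pcomp a b).
Proof.
case: t1; case: t2 => /= ta tb.
- apply: op_intro => x y u v /pcomp_Some[p ap bp] /pcomp_Some[q aq bq] lxy.
  exact: (or_elim tb bq bp (or_elim ta ap aq lxy)).
- apply: or_intro => x y u v /pcomp_Some[p ap bp] /pcomp_Some[q aq bq] lxy.
  exact: (op_elim tb bq bp (or_elim ta ap aq lxy)).
- apply: or_intro => x y u v /pcomp_Some[p ap bp] /pcomp_Some[q aq bq] lxy.
  exact: (or_elim tb bp bq (op_elim ta ap aq lxy)).
- apply: op_intro => x y u v /pcomp_Some[p ap bp] /pcomp_Some[q aq bq] lxy.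
  exact: (op_elim tb bp bq (op_elim ta ap aq lxy)).
Qed.

Lemma dom_comp a b : img a \subset dom b -> dom (Defs.pcomp a b) = dom a.
Proof.
move=> /subsetP s; apply/setP=> x; rewrite !in_dom pcompE.
case ax: (a x) => [p|] //=.
have : p \in img a by apply/imgP; exists x.
by move/s; rewrite in_dom.
Qed.

Lemma img_comp a b : dom b \subset img a -> img (Defs.pcomp a b) = img b.
Proof.
move=> /subsetP s; apply/setP=> y; apply/imgP/imgP => [[x /pcomp_Some[p _ bp]]|[p bp]].
  by exists p.
have : p \in dom b by rewrite in_dom bp.
move/s/imgP=> [x ax]; exists x; by rewrite pcompE ax.
Qed.

Lemma pcompA a b c : Defs.pcomp a (Defs.pcomp b c) = Defs.pcomp (Defs.pcomp a b) c.
Proof. apply/ffunP=> x; rewrite !pcompE; case: (a x) => [p|] //=; by rewrite pcompE. Qed.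

Lemma pid_l a : Defs.pcomp (pid n) a = a.
Proof. by apply/ffunP=> x; rewrite pcompE ffunE. Qed.

Lemma pid_r a : Defs.pcomp a (pid n) = a.
Proof. apply/ffunP=> x; rewrite pcompE; case: (a x) => //= p; by rewrite ffunE. Qed.

Lemma foldl_pcomp a s : foldl (@Defs.pcomp n) a s = Defs.pcomp a (Defs.pprod s).
Proof.
elim: s a => [|c s IH] a /=; first by rewrite pid_r.
rewrite IH; have -> : Defs.pprod (c :: s) = foldl (@Defs.pcomp n) (Defs.pcomp (pid n) c) s by []. by rewrite IH pid_l pcompA.
Qed.

Lemma pprod_cat (s1 s2 : seq (PT n)) : Defs.pprod (s1 ++ s2) = Defs.pcomp (Defs.pprod s1) (Defs.pprod s2).
Proof. by rewrite /Defs.pprod foldl_cat foldl_pcomp. Qed.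

Lemma pprod_cons c (s : seq (PT n)) : Defs.pprod (c :: s) = Defs.pcomp c (Defs.pprod s).
Proof. by rewrite /Defs.pprod /= foldl_pcomp pid_l. Qed.

Lemma gen_comp (S : {set PT n}) a b : Defs.generated S a -> Defs.generated S b -> Defs.generated S (Defs.pcomp a b).
Proof.
move=> [s1 [h1 ->]] [s2 [h2 ->]]; exists (s1 ++ s2); split; last by rewrite pprod_cat.
by rewrite all_cat h1 h2.
Qed.

Lemma gen_pid (S : {set PT n}) : Defs.generated S (pid n).
Proof. by exists [::]. Qed.

Lemma gen_one (S : {set PT n}) a : a \in S -> Defs.generated S a.
Proof. move=> h; exists [:: a]; split; first by rewrite /= h. by rewrite pprod_cons /Defs.pprod /= pid_r. Qed.

Lemma even_comp a b : even_restr a -> even_restr b -> even_restr (Defs.pcomp a b).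
Proof.
move=> /existsP[s /andP[es /forallP hs]] /existsP[r /andP[er /forallP hr]].
apply/existsP; exists (s * r)%g; rewrite odd_permM (negbTE es) (negbTE er) /=.
apply/forallP=> x; rewrite pcompE; move: (hs x); case: (a x) => [p|] //= /eqP.
case=> ->; by rewrite permM.
Qed.

Lemma AM_comp a b : a \in AM n -> b \in AM n -> Defs.pcomp a b \in AM n.
Proof.
rewrite !inE => /and3P[/andP[ia ea] ia' ma] /and3P[/andP[ib eb] ib' mb].
rewrite pinj_comp // even_comp //=.
case/orP: ma => ma; case/orP: mb => mb.
- by have := typ_comp (t1 := false) (t2 := false) ma mb => /= ->.
- by have := typ_comp (t1 := false) (t2 := true) ma mb => /= ->; rewrite orbT.
- by have := typ_comp (t1 := true) (t2 := false) ma mb => /= ->; rewrite orbT.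
- by have := typ_comp (t1 := true) (t2 := true) ma mb => /= ->.
Qed.

Lemma AM_pid : pid n \in AM n.
Proof.
rewrite !inE; apply/and3P; split.
- apply/andP; split.
    by apply: inj_intro => x y u; rewrite !ffunE => -[->] [->].
  apply/existsP; exists 1%g; rewrite odd_perm1 /=; apply/forallP=> x; by rewrite /pid ffunE perm1 eqxx orbT.
- by apply: inj_intro => x y u; rewrite !ffunE => -[->] [->].
- apply/orP; left; apply: op_intro => x y u v; by rewrite !ffunE => -[<-] [<-].
Qed.

Lemma AM_gen (S : {set PT n}) a : S \subset AM n -> Defs.generated S a -> a \in AM n.
Proof.
move=> /subsetP sS [s [hs ->]]; elim: s hs => [|c s IH] /=; first by move=> _; exact: AM_pid.
case/andP=> cS hs; rewrite pprod_cons; apply: AM_comp; [exact: sS | exact: IH].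
Qed.


Lemma ltm (k : 'I_n.-1) : k < m. Proof. exact: ltn_ord. Qed.

Lemma lift_lt (i : 'I_n) (x y : 'I_m) : (lift i x < lift i y) = (x < y).
Proof. rewrite /= /bump; case: (leqP i x) => h1; case: (leqP i y) => h2; apply/idP/idP => h; lia. Qed.

Lemma rev_lt k (x y : 'I_k) : (rev_ord x < rev_ord y) = (y < x).
Proof. rewrite /=; have := ltn_ord x; have := ltn_ord y; move=> hy hx; apply/idP/idP => h; lia. Qed.

Lemma lift_ltv (i : 'I_n) (x y : 'I_m) : (val (lift i x) < val (lift i y)) = (val x < val y).
Proof. exact: lift_lt. Qed.
Lemma rev_ltv k (x y : 'I_k) : (val (rev_ord x) < val (rev_ord y)) = (val y < val x).
Proof. exact: rev_lt. Qed.

Lemma sorted_enum_ord k : sorted (fun x y : 'I_k => val x < val y) (enum 'I_k).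
Proof. have := iota_ltn_sorted 0 k; by rewrite -val_enum_ord sorted_map. Qed.

Lemma enumX (i : 'I_n) : enum (Xs n i) = map (lift i) (enum 'I_m).
Proof.
symmetry; apply: eq_enum_sorted.
  rewrite sorted_map; apply: sub_sorted (sorted_enum_ord m) => x y.
  by rewrite /relpre /ltO /= lift_lt.
move=> y; rewrite inE; apply/mapP/idP => [[k _ ->]|].
  by have := neq_lift i k; rewrite eq_sym -(inj_eq val_inj).
case: (unliftP i y) => [k ->|->]; last by rewrite eqxx.
by move=> _; exists k; rewrite ?mem_enum.
Qed.

Lemma monoX (i j : 'I_n) t k :
  mono_map (Xs n i) (Xs n j) t (lift i k) = Some (lift j (if t then rev_ord k else k)).
Proof.
rewrite ffunE inE.
have -> : (val (lift i k) != val i) by have := neq_lift i k; rewrite eq_sym -(inj_eq val_inj).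
rewrite (enumX i) index_map ?index_enum_ord; last exact: lift_inj.
rewrite (enumX j).
congr Some; apply: val_inj.
have sz : size (map (lift j) (enum 'I_m)) = m by rewrite size_map size_enum_ord.
case: t.
  rewrite nth_rev sz ?ltn_ord // (nth_map k) ?size_enum_ord; last by have := ltn_ord k; lia.
  by rewrite /= nth_enum_ord //; have := ltn_ord k; lia.
by rewrite (nth_map k) ?size_enum_ord ?ltn_ord //= nth_enum_ord.
Qed.

Lemma monoX_none (i j : 'I_n) t : mono_map (Xs n i) (Xs n j) t i = None.
Proof. by rewrite ffunE inE eqxx. Qed.

Definition revp k : 'S_k := perm (@rev_ord_inj k).

Lemma revpE k x : revp k x = rev_ord x.
Proof. by rewrite permE. Qed.

Lemma odd_revp k : odd_perm (revp k) = odd (k./2).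
Proof.
elim: k => [|k IH].
  have -> : revp 0 = 1%g by apply/permP => -[].
  by rewrite odd_perm1.
have -> : revp k.+1 = lift_perm ord0 ord_max (revp k).
  apply/permP => x; case: (unliftP ord0 x) => [y ->|->].
    rewrite lift_perm_lift revpE; apply: val_inj; rewrite /= revpE /= /bump /=.
    have := ltn_ord y; case: leqP => h; lia.
  rewrite lift_perm_id revpE; apply: val_inj => /=; lia.
rewrite odd_lift_perm IH /= uphalf_half oddD; by case: (odd k).
Qed.

Lemma pinj_monoX (i j : 'I_n) t : pinj (mono_map (Xs n i) (Xs n j) t).
Proof.
apply: inj_intro => x y u.
case: (unliftP i x) => [k ->|->]; last by rewrite monoX_none.
case: (unliftP i y) => [k' ->|->]; last by rewrite monoX_none.
rewrite !monoX => e1; rewrite -e1 => -[] /(congr1 (unbump j)); rewrite !bumpK.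
case: t {e1} => h; congr lift; apply: val_inj => /=; move: h => /=;
  move: (ltm k) (ltm k'); set a := nat_of_ord k; set b := nat_of_ord k'; lia.
Qed.

Lemma typ_monoX (i j : 'I_n) t : typ t (mono_map (Xs n i) (Xs n j) t).
Proof.
case: t => /=; [apply: or_intro | apply: op_intro] => x y u v;
(case: (unliftP i x) => [k ->|->]; last by rewrite monoX_none; nd);
(case: (unliftP i y) => [k' ->|->]; last by rewrite monoX_none; nd);
rewrite !monoX => -[<-] [<-]; by rewrite !lift_ltv ?rev_ltv.
Qed.

Lemma extX (i j : 'I_n) t :
  [forall x, (mono_map (Xs n i) (Xs n j) t x == None) ||
     (mono_map (Xs n i) (Xs n j) t x == Some (lift_perm i j (if t then revp m else 1%g) x))].
Proof.
apply/forallP=> x; case: (unliftP i x) => [k ->|->]; last by rewrite monoX_none.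
rewrite monoX lift_perm_lift; case: t; by rewrite ?revpE ?perm1 eqxx orbT.
Qed.

Lemma perm_agree_lift (i : 'I_n) (s p : 'S_n) : (forall k, s (lift i k) = p (lift i k)) -> s = p.
Proof.
move=> h.
have q1 : forall x, x != i -> (s * p^-1)%g x = x.
  move=> x; case: (unliftP i x) => [k ->|->]; last by rewrite eqxx.
  by move=> _; rewrite permM h permK.
have qi : (s * p^-1)%g i = i.
  apply/eqP; apply/negP => /negP ne.
  have := q1 _ ne; move/perm_inj => e; by rewrite e eqxx in ne.
have : (s * p^-1)%g = 1%g.
  apply/permP => x; rewrite perm1; case: (eqVneq x i) => [->|ne]; [exact: qi | exact: q1].
by move/(congr1 (fun r => (r * p)%g)); rewrite -mulgA mulVg mulg1 mul1g.
Qed.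


Lemma monoX_comp (i j l : 'I_n) t1 t2 :
  Defs.pcomp (mono_map (Xs n i) (Xs n j) t1) (mono_map (Xs n j) (Xs n l) t2) =
  mono_map (Xs n i) (Xs n l) (t1 (+) t2).
Proof.
apply/ffunP=> x; rewrite pcompE.
case: (unliftP i x) => [k ->|->]; last by rewrite !monoX_none.
rewrite !monoX /= !monoX.
by case: t1; case: t2; rewrite /= ?rev_ordK.
Qed.

Hypothesis hm : n %% 4 = 3.

Lemma par_facts : [/\ odd m = false, odd (m./2) = true & odd (n./2) = true].
Proof.
have e := divn_eq n 4; rewrite hm in e.
set q := n %/ 4 in e.
have em : m = (2 * q + 1).*2 by rewrite -muln2; lia.
have en : n = true + (2 * q + 1).*2 by rewrite -muln2 /=; lia.
split.
- by rewrite em odd_double.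
- by rewrite em doubleK oddD oddM.
- by rewrite en half_bit_double oddD oddM.
Qed.

Definition nx (i : 'I_n) : 'I_n := inord (i.+1 %% n).

Lemma nxE (i : 'I_n) : (nx i : nat) = i.+1 %% n.
Proof. by rewrite inordK // ltn_pmod. Qed.

Definition MM (i j : 'I_n) := mono_map (Xs n i) (Xs n j) (odd (i + j)).

Lemma ygenE (i : 'I_n) : ygen n i = MM i (nx i).
Proof.
have [pm _ _] := par_facts.
rewrite /ygen /MM nxE; case: ifP => h.
  by rewrite modn_small // oddD /=; case: (odd i).
have ei : (i : nat) = m by have := ltn_ord i; move: h; rewrite ltnS; lia.
by rewrite ei modnn addn0 pm.
Qed.

Lemma gen_ygen (i : 'I_n) : Defs.generated (Ygens n) (ygen n i).
Proof. apply: gen_one; apply/imsetP; by exists i. Qed.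

Lemma genM_d d : d < n -> forall i : 'I_n, Defs.generated (Ygens n) (MM i (inord ((i + d.+1) %% n))).
Proof.
elim: d => [|d IH] hd i.
  have -> : (inord ((i + 1) %% n) : 'I_n) = nx i by rewrite /nx addn1.
  rewrite -ygenE; exact: gen_ygen.
have -> : MM i (inord ((i + d.+2) %% n)) =
    Defs.pcomp (ygen n i) (MM (nx i) (inord ((nx i + d.+1) %% n))).
  rewrite ygenE /MM monoX_comp; congr mono_map.
    congr (Xs n); congr nat_of_ord; congr inord.
    by rewrite nxE modnDml; congr (_ %% n); lia.
  set j := (inord ((nx i + d.+1) %% n) : 'I_n).
  have -> : (inord ((i + d.+2) %% n) : 'I_n) = j.
    by rewrite /j nxE modnDml; congr inord; congr (_ %% n); lia.
  by rewrite !oddD; case: (odd i); case: (odd (nx i)); case: (odd j).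
apply: gen_comp; first exact: gen_ygen.
apply: IH; lia.
Qed.

Lemma genM (i j : 'I_n) : Defs.generated (Ygens n) (MM i j).
Proof.
have := @genM_d ((j + (n - i) + m) %% n) (ltn_pmod _ (ltn0Sn m)) i.
have -> : (inord ((i + ((j + (n - i) + m) %% n).+1) %% n) : 'I_n) = j; last by [].
apply: val_inj => /=; rewrite inordK; last by rewrite ltn_pmod.
move: (ltn_ord i) (ltn_ord j); move: (nat_of_ord i) (nat_of_ord j) => a b ha hb.
rewrite addnS -addSn addnC modnDml.
have -> : (b + (n - a) + m) + a.+1 = 2 * n + b by lia.
by rewrite modnMDl modn_small.
Qed.

Lemma AM_monoX (i j : 'I_n) t : t = odd (i + j) -> mono_map (Xs n i) (Xs n j) t \in AM n.
Proof.
have [_ pmh _] := par_facts.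
move=> ht; rewrite !inE pinj_monoX /=.
have tp := typ_monoX i j t.
apply/andP; split; last by case: t ht tp => _ /= ->; rewrite ?orbT.
apply/existsP; exists (lift_perm i j (if t then revp m else 1%g)).
rewrite extX andbT odd_lift_perm ht.
case: (boolP (odd (i + j))) => h; rewrite ?odd_revp ?pmh ?odd_perm1; move: h; rewrite oddD;
  by case: (odd i); case: (odd j).
Qed.

Lemma even_monoX (i j : 'I_n) t : even_restr (mono_map (Xs n i) (Xs n j) t) -> t = odd (i + j).
Proof.
have [_ pmh _] := par_facts.
move=> /existsP[s /andP[es /forallP hs]].
have : s = lift_perm i j (if t then revp m else 1%g).
  apply: (perm_agree_lift (i := i)) => k.
  move: (hs (lift i k)); rewrite monoX lift_perm_lift /= => /eqP [<-].
  by case: (t); rewrite ?revpE ?perm1.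
move=> es'; move: es; rewrite es' odd_lift_perm oddD.
case: (t); rewrite ?odd_revp ?pmh ?odd_perm1; by case: (odd i); case: (odd j).
Qed.

Lemma tot_AM a : a \in AM n -> dom a = [set: 'I_n] -> a = pid n.
Proof.
have [_ _ pnh] := par_facts.
rewrite !inE => /and3P[/andP[ia ea] _ ma] hd.
have ta : typ (~~ order_preserving a) a.
  by case/orP: ma => h; rewrite /typ ?h //=; case: (order_preserving a).
have hi : img a = [set: 'I_n].
  by apply/eqP; rewrite eqEcard subsetT /= -card_dom_img // hd.
have := char ia ta; rewrite hd hi => e.
have ex : forall x : 'I_n, index x (enum [set: 'I_n]) = x.
  by move=> x; rewrite enum_setT -enumT index_enum_ord.
move: ta ea; rewrite e; case: (order_preserving a) => _ /=.
  move=> _; apply/ffunP=> x; rewrite !ffunE in_setT ex enum_setT -enumT nth_ord_enum.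
  done.
have ev : forall x, mono_map [set: 'I_n] [set: 'I_n] true x = Some (rev_ord x).
  move=> x; rewrite ffunE in_setT ex enum_setT -enumT nth_rev ?size_enum_ord //.
  congr Some; apply: val_inj => /=; rewrite nth_enum_ord //; have := ltn_ord x; lia.
move=> /existsP[s /andP[es /forallP hs]].
have : s = revp n.
  apply/permP => x; move: (hs x); rewrite ev revpE /= => /eqP[->] //.
by move=> es'; move: es; rewrite es' odd_revp pnh.
Qed.


Lemma sw_arith (i j h b c k k' : nat) : (j = i.+1 \/ i = j.+1) -> h <> i -> h <> j ->
  ((i < h /\ j < h /\ ((b = h /\ c = h.-1) \/ (b = h.-1 /\ c = h))) \/
   (h < i /\ h < j /\ ((b = h /\ c = h.+1) \/ (b = h.+1 /\ c = h)))) ->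
  bump b k = bump c k' -> bump i k <> h /\ bump j k' = (if bump i k == j then i else bump i k).
Proof.
rewrite /bump => hij hi hj hb e.
case: eqP => q; case: (leqP i k) => q1 ;case: (leqP b k) => q2; case: (leqP c k') => q3;
  case: (leqP j k') => q4; move: e q q1 q2 q3 q4 => /=; lia.
Qed.

Lemma sw_arith2 (i j h b c k : nat) : (j = i.+1 \/ i = j.+1) -> h <> i -> h <> j ->
  ((i < h /\ j < h /\ ((b = h /\ c = h.-1) \/ (b = h.-1 /\ c = h))) \/
   (h < i /\ h < j /\ ((b = h /\ c = h.+1) \/ (b = h.+1 /\ c = h)))) ->
  bump b k = c -> bump i k = h.
Proof.
rewrite /bump => hij hi hj hb e.
case: (leqP i k) => q1 ;case: (leqP b k) => q2; move: e q1 q2 => /=; lia.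
Qed.

Definition Sw (i j h : 'I_n) : PT n :=
  [ffun x => if (x == i) || (x == h) then None else Some (if x == j then i else x)].

Lemma Sw_eq (i j h b c : 'I_n) : (j = i.+1 :> nat \/ i = j.+1 :> nat) ->
  (h : nat) <> i -> (h : nat) <> j ->
  ((i < h /\ j < h /\ ((b = h :> nat /\ c = h.-1 :> nat) \/ (b = h.-1 :> nat /\ c = h :> nat))) \/
   (h < i /\ h < j /\ ((b = h :> nat /\ c = h.+1 :> nat) \/ (b = h.+1 :> nat /\ c = h :> nat)))) ->
  odd (i + b) = false -> odd (c + j) = false ->
  Defs.pcomp (MM i b) (MM c j) = Sw i j h.
Proof.
move=> hij hi hj hb pb pc.
apply/ffunP => x; rewrite pcompE /MM pb pc [RHS]ffunE.
case: (unliftP i x) => [k ->|->]; last by rewrite monoX_none eqxx.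
have e1 : (lift i k == i) = false.
  by apply/negbTE; rewrite eq_sym neq_lift.
rewrite monoX /= e1 /=.
case: (unliftP c (lift b k)) => [k' e|e].
  have [ar1 ar2] := @sw_arith i j h b c k k' hij hi hj hb (congr1 val e).
  have e2 : (lift i k == h) = false by apply/negbTE/eqP => /(congr1 val).
  rewrite e monoX e2; congr Some; apply: val_inj; rewrite fun_if /= ar2.
  by rewrite -(inj_eq val_inj).
have ar := @sw_arith2 i j h b c k hij hi hj hb (congr1 val e).
have e2 : (lift i k == h) by apply/eqP/val_inj.
by rewrite e monoX_none e2.
Qed.


Lemma Sw_gen (i j h : 'I_n) : (j = i.+1 :> nat \/ i = j.+1 :> nat) ->
  (h : nat) <> i -> (h : nat) <> j -> Defs.generated (Ygens n) (Sw i j h).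
Proof.
move=> hij hi hj.
have pij : odd j = ~~ odd i by case: hij => ->; rewrite /= ?negbK.
have gg : forall b c : 'I_n, Defs.pcomp (MM i b) (MM c j) = Sw i j h ->
    Defs.generated (Ygens n) (Sw i j h).
  by move=> b c <-; apply: gen_comp; apply: genM.
case: (ltngtP i h) => hih; last by move: hi; rewrite hih.
- have jh : j < h by lia.
  have h0 : 0 < (h : nat) by lia.
  have oh : odd h = ~~ odd h.-1 by rewrite -{1}(prednK h0).
  have h1lt : h.-1 < n by have := ltn_ord h; lia.
  pose h1 := Ordinal h1lt.
  case po: (odd h == odd i).
  + apply: (gg h h1); apply: Sw_eq => //.
    * by left; split => //; split => //; left.
    * by rewrite oddD; move: po; case: (odd h); case: (odd i).
    * by rewrite oddD /= pij; move: po; rewrite oh; case: (odd h.-1); case: (odd i).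
  + apply: (gg h1 h); apply: Sw_eq => //.
    * by left; split => //; split => //; right.
    * by rewrite oddD /=; move: po; rewrite oh; case: (odd h.-1); case: (odd i).
    * by rewrite oddD /= pij; move: po; case: (odd h); case: (odd i).
- have jh : h < j by lia.
  have h2lt : h.+1 < n by have := ltn_ord i; lia.
  pose h2 := Ordinal h2lt.
  case po: (odd h == odd i).
  + apply: (gg h h2); apply: Sw_eq => //.
    * by right; split => //; split => //; left.
    * by rewrite oddD; move: po; case: (odd h); case: (odd i).
    * by rewrite oddD /= pij; move: po; case: (odd h); case: (odd i).
  + apply: (gg h2 h); apply: Sw_eq => //.
    * by right; split => //; split => //; right.
    * by rewrite oddD /=; move: po; case: (odd h); case: (odd i).
    * by rewrite oddD /= pij; move: po; case: (odd h); case: (odd i).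
Qed.


Definition Real (D I : {set 'I_n}) t := exists g,
  [/\ Defs.generated (Ygens n) g, pinj g, typ t g, dom g = D & img g = I].

Lemma Real_comp D J I t1 t2 : Real D J t1 -> Real J I t2 -> Real D I (t1 (+) t2).
Proof.
move=> [g1 [G1 i1 t1' d1 m1]] [g2 [G2 i2 t2' d2 m2]].
exists (Defs.pcomp g1 g2); split.
- exact: gen_comp.
- exact: pinj_comp.
- exact: typ_comp.
- by rewrite dom_comp // m1 d2.
- by rewrite img_comp // m1 d2.
Qed.

Definition L k : {set 'I_n} := [set x : 'I_n | x < k].

Lemma card_L k : k <= n -> #|L k| = k.
Proof.
elim: k => [|k IH] hk.
  by apply/eqP; rewrite cards_eq0; apply/eqP/setP => x; rewrite !inE.
have -> : L k.+1 = (Ordinal hk) |: L k.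
  by apply/setP => x; rewrite !inE -(inj_eq val_inj) /= ltnS leq_eqVlt.
by rewrite cardsU1 IH ?inE /= ?ltnn //; apply: ltnW.
Qed.

Lemma dom_monoX (i j : 'I_n) t : dom (mono_map (Xs n i) (Xs n j) t) = Xs n i.
Proof.
apply/setP => x; rewrite in_dom inE.
case: (unliftP i x) => [k ->|->]; last by rewrite monoX_none !eqxx.
rewrite monoX /=; symmetry; have := neq_lift i k; by rewrite eq_sym -(inj_eq val_inj).
Qed.

Lemma img_monoX (i j : 'I_n) t : img (mono_map (Xs n i) (Xs n j) t) = Xs n j.
Proof.
apply/setP => y; rewrite [y \in Xs n j]inE; apply/imgP/idP => [[x]|].
  case: (unliftP i x) => [k ->|->]; last by rewrite monoX_none.
  rewrite monoX => -[<-]; have := neq_lift j (if t then rev_ord k else k).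
  by rewrite eq_sym -(inj_eq val_inj).
case: (unliftP j y) => [k ->|->]; last by rewrite eqxx.
move=> _; exists (lift i (if t then rev_ord k else k)); rewrite monoX.
by case: t; rewrite ?rev_ordK.
Qed.

Definition pe (A : {set 'I_n}) : PT n := [ffun x => if x \in A then Some x else None].

Lemma pe_mono (A : {set 'I_n}) : mono_map A A false = pe A.
Proof.
apply/ffunP => x; rewrite !ffunE; case: ifP => // xA.
by rewrite nth_index ?mem_enum.
Qed.

Lemma pe_X (i : 'I_n) : pe (Xs n i) = MM i i.
Proof. by rewrite /MM addnn odd_double pe_mono. Qed.

Lemma pe_comp (A B : {set 'I_n}) : Defs.pcomp (pe A) (pe B) = pe (A :&: B).
Proof.
apply/ffunP => x; rewrite pcompE !ffunE inE; case: (x \in A) => //=; by rewrite ffunE.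
Qed.

Lemma gen_peL k : k <= m -> Defs.generated (Ygens n) (pe (L k)).
Proof.
move=> hk.
suff H : forall d, d <= m -> Defs.generated (Ygens n) (pe (L (m - d))).
  by have := H (m - k) (leq_subr _ _); rewrite subKn.
elim=> [|d IH] hd.
  have -> : L (m - 0) = Xs n (ord_max : 'I_n).
    by apply/setP => x; rewrite !inE subn0 /= ltn_neqAle -ltnS ltn_ord andbT.
  rewrite pe_X; exact: genM.
have -> : L (m - d.+1) = L (m - d) :&: Xs n (inord (m - d.+1) : 'I_n).
  apply/setP => x; rewrite !inE inordK; last by lia.
  apply/idP/andP => [h|[h1 h2]]; first by split; rewrite /=; lia.
  move: h1 h2 => /=; lia.
rewrite -pe_comp; apply: gen_comp; first by apply: IH; lia.
rewrite pe_X; exact: genM.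
Qed.

Lemma Real_L k : k <= m -> Real (L k) (L k) false.
Proof.
move=> hk; exists (pe (L k)); split.
- exact: gen_peL.
- by apply: inj_intro => x y u; rewrite !ffunE; do 2 case: ifP => _ //; move=> [<-] [].
- by apply: op_intro => x y u v; rewrite !ffunE; do 2 case: ifP => _ //; move=> [<-] [<-].
- by apply/setP => x; rewrite in_dom ffunE; case: ifP.
- apply/setP => y; apply/imgP/idP => [[x]|h]; last by exists y; rewrite ffunE h.
  by rewrite ffunE; case: ifP => // xA [<-].
Qed.


Lemma adj_nat (P : nat -> bool) e d : ~~ P e -> P d -> e < d ->
  exists g, [/\ e <= g, g < d, ~~ P g & P g.+1].
Proof.
elim: d => // d IH ne pd ed.
case: (boolP (P d)) => pd'.
  have ed' : e < d by rewrite ltn_neqAle -ltnS ed andbT; apply/eqP => e'; move: ne; rewrite e' pd'.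
  by have [g [h1 h2 h3 h4]] := IH ne pd' ed'; exists g; split => //; apply: ltnW.
by exists d; split => //; rewrite -ltnS.
Qed.

Lemma ex_adj k (D : {set 'I_n}) : #|D| = k -> D != L k ->
  exists g g1 : 'I_n, [/\ val g1 = g.+1, g \notin D & g1 \in D].
Proof.
move=> cD nD.
have kn : k <= n by rewrite -cD; apply: leq_trans (max_card _) _; rewrite card_ord.
have [d dD kd] : exists2 d : 'I_n, d \in D & k <= d.
  case: (boolP [exists d in D, k <= d]) => [/exists_inP[d dD kd]|nd]; first by exists d.
  have sub : D \subset L k.
    apply/subsetP => x xD; rewrite inE ltnNge; apply/negP => kx.
    by move/exists_inP: nd; apply; exists x.
  move: nD; rewrite eqEcard sub card_L // cD leqnn.
  done.
have [e [ed eD]] : exists e : 'I_n, e < d /\ e \notin D.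
  case: (boolP [exists e : 'I_n, (e < d) && (e \notin D)]) => [/existsP[e /andP[h1 h2]]|ne].
    by exists e.
  have sub : L d.+1 \subset D.
    apply/subsetP => x; rewrite inE ltnS leq_eqVlt => /orP[/eqP xd|xd].
      by have -> : x = d by apply: val_inj.
    apply/negPn/negP => xD; move/existsP: ne; apply; exists x; by rewrite xd xD.
  have := subset_leq_card sub; rewrite card_L ?cD; last exact: ltn_ord.
  lia.
pose P x := [exists y : 'I_n, (val y == x) && (y \in D)].
have nPe : ~~ P e.
  apply/existsP => -[y /andP[/eqP ye yD]]; have : y = e by apply: val_inj.
  by move=> yeq; move: eD; rewrite -yeq yD.
have Pd : P d by apply/existsP; exists d; rewrite eqxx dD.
have [g [eg gd nPg Pg1]] := adj_nat nPe Pd ed.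
have gn : g < n by have := ltn_ord d; lia.
move/existsP: Pg1 => [g1 /andP[/eqP g1v g1D]].
exists (Ordinal gn), g1; split => //.
apply/negP => gD; move: nPg; rewrite negb_exists => /forallP /(_ (Ordinal gn)).
by rewrite eqxx gD.
Qed.

Lemma ex_h (D : {set 'I_n}) (g : 'I_n) : #|D| <= m.-1 -> exists h : 'I_n, h \notin D /\ h != g.
Proof.
move=> cD.
have c2 : 1 < #|~: D| by have := cardsC D; rewrite card_ord; lia.
have : 0 < #|(~: D) :\ g|.
  by move: c2; rewrite (cardsD1 g (~: D)); case: (g \in ~: D) => /=;
    [rewrite add1n ltnS | rewrite add0n => /ltnW].
move/card_gt0P => [h]; rewrite !inE => /andP[hg hD]; by exists h.
Qed.

Lemma sum_step (D : {set 'I_n}) (g g1 : 'I_n) : val g1 = g.+1 -> g \notin D -> g1 \in D ->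
  (\sum_(x in g |: (D :\ g1)) (x : nat) < \sum_(x in D) (x : nat)) /\ #|g |: (D :\ g1)| = #|D|.
Proof.
move=> gv gD g1D.
have gD' : g \notin D :\ g1 by rewrite inE (negbTE gD) andbF.
rewrite (big_setD1 g1 g1D) big_setU1 //= cardsU1 gD' (cardsD1 g1 D) g1D gv; split => //; lia.
Qed.

Lemma pinj_Sw (i j h : 'I_n) : pinj (Sw i j h).
Proof.
apply: inj_intro => x y u; rewrite !ffunE.
case hx: ((x == i) || (x == h)); first nd.
case hy: ((y == i) || (y == h)); first nd.
move/negbT/norP: hx => [xi xh]; move/negbT/norP: hy => [yi yh].
move=> e1 e2; have := e2; rewrite -e1 => -[].
case: (eqVneq x j) => [xj|xj]; case: (eqVneq y j) => [yj|yj]; rewrite ?xj ?yj ?eqxx ?(negbTE xj) ?(negbTE yj) //.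
- by move=> e; move: yi; rewrite e eqxx.
- by move=> e; move: xi; rewrite -e eqxx.
Qed.

Lemma typ_Sw (i j h : 'I_n) : (j = i.+1 :> nat \/ i = j.+1 :> nat) -> typ false (Sw i j h).
Proof.
move=> hij; apply: op_intro => x y u v; rewrite !ffunE.
case hx: ((x == i) || (x == h)); first nd.
case hy: ((y == i) || (y == h)); first nd.
move/negbT/norP: hx => [xi xh]; move/negbT/norP: hy => [yi yh].
move=> [<-] [<-].
move: xi yi; rewrite -!(inj_eq val_inj) => xi yi.
case: eqP => xj; case: eqP => yj /=; rewrite ?xj ?yj; move: xi yi; rewrite ?xj ?yj /=; lia.
Qed.

Lemma dom_Sw (i j h : 'I_n) x : (x \in dom (Sw i j h)) = (x != i) && (x != h).
Proof. by rewrite in_dom ffunE; case: (x == i); case: (x == h). Qed.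

Lemma fwd_step (D D' I : {set 'I_n}) (g g1 h : 'I_n) : val g1 = g.+1 -> g \notin D -> g1 \in D ->
  h \notin D -> h != g -> D' = g |: (D :\ g1) -> Real D' I false -> Real D I false.
Proof.
move=> gv gD g1D hD hg eD [g2 [G2 i2 t2 d2 m2]].
have g1h : (h : nat) <> g1 by move=> e; move: hD; rewrite (val_inj e) g1D.
have g1g : g1 != g by apply/eqP => /(congr1 val); rewrite gv /=; lia.
exists (Defs.pcomp (Sw g g1 h) g2); split.
- apply: gen_comp => //; apply: Sw_gen; [by left | by move/val_inj/eqP; rewrite (negbTE hg) | by []].
- by apply: pinj_comp => //; apply: pinj_Sw.
- by apply: (typ_comp (t1 := false) (t2 := false)) => //; apply: typ_Sw; left.
- apply/setP => x; rewrite in_dom pcompE ffunE.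
  case: ifP => [/orP[/eqP->|/eqP->]|/norP[xg xh]]; first by rewrite (negbTE gD).
    by rewrite (negbTE hD).
  rewrite /= -in_dom d2 eD !inE.
  case: (eqVneq x g1) => [->|xg1]; first by rewrite !eqxx g1D.
  by rewrite (negbTE xg) xg1.
- rewrite img_comp // d2 eD; apply/subsetP => y /setU1P[->|/setD1P[yg1 yD]].
    apply/imgP; exists g1; rewrite ffunE eqxx (negbTE g1g) /=.
    by have -> : (g1 == h) = false by apply/negbTE; rewrite eq_sym; apply/eqP => e; apply: g1h; rewrite e.
  apply/imgP; exists y; rewrite ffunE (negbTE yg1).
  have -> : (y == g) = false by apply/negbTE/eqP => e; move: gD; rewrite -e yD.
  by have -> : (y == h) = false by apply/negbTE/eqP => e; move: hD; rewrite -e yD.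
Qed.


Lemma bwd_step (A I I' : {set 'I_n}) (g g1 h : 'I_n) : val g1 = g.+1 -> g \notin I -> g1 \in I ->
  h \notin I -> h != g -> I' = g |: (I :\ g1) -> Real A I' false -> Real A I false.
Proof.
move=> gv gI g1I hI hg eI [g2 [G2 i2 t2 d2 m2]].
have g1h : h != g1 by apply/eqP => e; move: hI; rewrite e g1I.
have g1g : g1 != g by apply/eqP => /(congr1 val); rewrite gv /=; lia.
have gg1 : (g == g1) = false by rewrite eq_sym (negbTE g1g).
have hgf : (g == h) = false by rewrite eq_sym (negbTE hg).
exists (Defs.pcomp g2 (Sw g1 g h)); split.
- apply: gen_comp => //; apply: Sw_gen; [by right | by move/val_inj/eqP; rewrite (negbTE g1h) | by move/val_inj/eqP; rewrite (negbTE hg)].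
- by apply: pinj_comp => //; apply: pinj_Sw.
- by apply: (typ_comp (t1 := false) (t2 := false)) => //; apply: typ_Sw; right.
- rewrite dom_comp // m2 eI; apply/subsetP => y /setU1P[->|/setD1P[yg1 yI]]; rewrite dom_Sw.
    by rewrite eq_sym g1g eq_sym hg.
  rewrite yg1 /=; by apply/eqP => e; move: hI; rewrite -e yI.
- apply/setP => y; apply/imgP/idP => [[x /pcomp_Some[z g2x]]|yI].
    have : z \in I' by rewrite -m2; apply/imgP; exists x.
    rewrite eI ffunE => /setU1P[->|/setD1P[zg1 zI]].
      by rewrite eqxx gg1 hgf /= => -[<-].
    case: ifP => _; first nd.
    case: eqP => [zg|_ [<-] //]; by move: gI; rewrite -zg zI.
  case: (eqVneq y g1) => [->|yg1].
    have : g \in I' by rewrite eI setU11.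
    rewrite -m2 => /imgP[x g2x]; exists x; rewrite pcompE g2x /= ffunE.
    by rewrite eqxx gg1 hgf.
  have : y \in I' by rewrite eI; apply/setU1P; right; apply/setD1P.
  rewrite -m2 => /imgP[x g2x]; exists x; rewrite pcompE g2x /= ffunE (negbTE yg1).
  have -> : (y == h) = false by apply/negbTE/eqP => e; move: hI; rewrite -e yI.
  by have -> : (y == g) = false by apply/negbTE/eqP => e; move: gI; rewrite -e yI.
Qed.

Lemma bub_fwd k : k <= m.-1 -> forall D : {set 'I_n}, #|D| = k -> Real D (L k) false.
Proof.
move=> hk.
suff H : forall s (D : {set 'I_n}), \sum_(x in D) (x : nat) < s -> #|D| = k -> Real D (L k) false.
  by move=> D; apply: (H (\sum_(x in D) (x : nat)).+1).
elim=> [|s IH] D // hs cD.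
case: (eqVneq D (L k)) => [->|nD]; first by apply: Real_L; lia.
have [g [g1 [gv gD g1D]]] := ex_adj cD nD.
have [h [hD hg]] : exists h : 'I_n, h \notin D /\ h != g by apply: ex_h; rewrite cD.
have [ss cc] := sum_step gv gD g1D.
apply: (fwd_step gv gD g1D hD hg (erefl _)).
apply: IH; last by rewrite cc.
by apply: leq_trans ss _; rewrite -ltnS.
Qed.

Lemma bub_bwd k : k <= m.-1 -> forall I : {set 'I_n}, #|I| = k -> Real (L k) I false.
Proof.
move=> hk.
suff H : forall s (I : {set 'I_n}), \sum_(x in I) (x : nat) < s -> #|I| = k -> Real (L k) I false.
  by move=> I; apply: (H (\sum_(x in I) (x : nat)).+1).
elim=> [|s IH] I // hs cI.
case: (eqVneq I (L k)) => [->|nI]; first by apply: Real_L; lia.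
have [g [g1 [gv gI g1I]]] := ex_adj cI nI.
have [h [hI hg]] : exists h : 'I_n, h \notin I /\ h != g by apply: ex_h; rewrite cI.
have [ss cc] := sum_step gv gI g1I.
apply: (bwd_step gv gI g1I hI hg (erefl _)).
apply: IH; last by rewrite cc.
by apply: leq_trans ss _; rewrite -ltnS.
Qed.

Lemma m_ge2 : 2 <= m.
Proof.
have e := divn_eq n 4; rewrite hm in e; lia.
Qed.

Lemma Real_all (D I : {set 'I_n}) t : #|D| = #|I| -> #|D| <= m.-1 -> Real D I t.
Proof.
move=> cDI hk.
case: t.
  have [g1 [G1 i1 t1 d1 m1]] := bub_fwd hk (erefl _).
  have m2 := m_ge2.
  pose i0 : 'I_n := inord m.-1.
  pose j0 : 'I_n := ord_max.
  have vi0 : (i0 : nat) = m.-1 by rewrite inordK //; lia.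
  have pr : odd (i0 + j0) = true.
    rewrite vi0 /= -{2}(prednK (ltnW m2)) addnS /= oddD; by case: (odd m.-1).
  have ty : typ true (MM i0 j0) by have := typ_monoX i0 j0 (odd (i0 + j0)); rewrite /MM pr.
  pose c := Defs.pcomp g1 (MM i0 j0).
  have dc : dom c = D.
    rewrite dom_comp // m1 /MM dom_monoX; apply/subsetP => x; rewrite !inE vi0 => xk.
    apply/eqP => e; move: xk hk; rewrite e; lia.
  have ic : pinj c by apply: pinj_comp => //; exact: pinj_monoX.
  have RB : Real D (img c) true.
    exists c; split => //.
    - apply: gen_comp => //; exact: genM.
    - exact: (typ_comp (t1 := false) (t2 := true)).
  have cB : #|img c| = #|D| by rewrite -card_dom_img // dc.
  have := Real_comp RB (Real_comp (bub_fwd (k := #|D|) hk cB) (bub_bwd hk (esym cDI))).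
  by [].
by have := Real_comp (bub_fwd hk (erefl _)) (bub_bwd hk (esym cDI)).
Qed.


Lemma card_m_X (A : {set 'I_n}) : #|A| = m -> exists i : 'I_n, A = Xs n i.
Proof.
move=> cA.
have : #|~: A| == 1 by have := cardsC A; rewrite card_ord cA; lia.
move/cards1P => [i ei]; exists i; apply/setP => x.
by rewrite -[A]setCK ei !inE -(inj_eq val_inj).
Qed.

Lemma X_inj (i j : 'I_n) : Xs n i = Xs n j -> i = j.
Proof.
move=> e; apply/eqP/negPn/negP => ne.
have : (i : 'I_n) \in Xs n j by rewrite inE (inj_eq val_inj).
by rewrite -e inE eqxx.
Qed.

Lemma gen_all a : a \in AM n -> Defs.generated (Ygens n) a.
Proof.
move=> aAM; have aAM' := aAM.
move: aAM'; rewrite !inE => /and3P[/andP[ia ea] _ ma].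
pose t := ~~ order_preserving a.
have ta : typ t a by case/orP: ma => h; rewrite /t /typ ?h //=; case: (order_preserving a).
have e := char ia ta.
have cdi := card_dom_img ia.
have cmax : #|dom a| <= n by apply: leq_trans (max_card _) _; rewrite card_ord.
case: (ltngtP #|dom a| m) => hc.
- have [g [G ig tg dg mg]] : Real (dom a) (img a) t by apply: Real_all => //; lia.
  have eg := char ig tg; by rewrite e -dg -mg -eg.
- have dT : dom a = [set: 'I_n].
    apply/eqP; rewrite eqEcard subsetT /= cardsT card_ord; exact: hc.
  rewrite (tot_AM aAM dT); exact: gen_pid.
- have [i ei] := card_m_X hc.
  have [j ej] : exists j : 'I_n, img a = Xs n j by apply: card_m_X; rewrite -cdi.
  rewrite ei ej in e.
  have ht : t = odd (i + j) by apply: even_monoX; rewrite -e.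
  rewrite e ht; exact: genM.
Qed.

Lemma dom_ygen (i : 'I_n) : dom (ygen n i) = Xs n i.
Proof. by rewrite ygenE /MM dom_monoX. Qed.

Lemma ygen_AM (i : 'I_n) : ygen n i \in AM n.
Proof. by rewrite ygenE /MM; apply: AM_monoX. Qed.

Lemma first_nonid (s : seq (PT n)) : all (mem (AM n)) s ->
  Defs.pprod s = pid n \/
  exists c, [/\ c \in s, c \in AM n, c != pid n & dom (Defs.pprod s) \subset dom c].
Proof.
elim: s => [|c s IH] /=; first by left.
case/andP => cA hs; rewrite pprod_cons.
case: (eqVneq c (pid n)) => [->|cn].
  rewrite pid_l; case: (IH hs) => [->|[c' [h1 h2 h3 h4]]]; first by left.
  by right; exists c'; split => //; rewrite inE h1 orbT.
right; exists c; split => //; first by rewrite inE eqxx.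
apply/subsetP => x; rewrite !in_dom pcompE; by case: (c x).
Qed.

Lemma lower (S : {set PT n}) : generates S (AM n) -> n <= #|S|.
Proof.
move=> [sS hS].
have H : forall i : 'I_n, exists c, (c \in S) && (dom c == Xs n i).
  move=> i; have [s [alls es]] := (hS (ygen n i)).1 (ygen_AM i).
  have allA : all (mem (AM n)) s.
    by apply/allP => x xs; move/allP: alls => /(_ x xs); apply: (subsetP sS).
  case: (first_nonid allA) => [ep|[c [cs cA cn sub]]].
    have : ygen n i i = pid n i by rewrite es ep.
    by rewrite ygenE /MM monoX_none ffunE.
  exists c; move/allP: alls => /(_ c cs) -> /=.
  rewrite -es dom_ygen in sub.
  have dn : dom c != [set: 'I_n] by apply/eqP => dT; move: cn; rewrite (tot_AM cA dT) eqxx.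
  have [z zn] : exists z, z \notin dom c.
    case: (boolP [forall z, z \in dom c]) => [/forallP allz|/forallPn [z zn]]; last by exists z.
    suff dT : dom c = [set: 'I_n] by move: dn; rewrite dT eqxx.
    by apply/setP => z; rewrite allz inE.
  have zi : z = i.
    apply/eqP/negPn/negP => ne; move: zn; rewrite (subsetP sub) //.
    by rewrite inE (inj_eq val_inj).
  subst z; apply/eqP/setP => x; apply/idP/idP => [xd|]; last by move/(subsetP sub).
  rewrite inE; apply/negP => /eqP /val_inj ex; move: zn; by rewrite -ex xd.
pose F i := xchoose (H i).
have FP i : (F i \in S) && (dom (F i) == Xs n i) := xchooseP (H i).
have Finj : injective F.
  move=> i j e; apply: X_inj.
  by move: (FP i) (FP j) => /andP[_ /eqP <-] /andP[_ /eqP <-]; rewrite e.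
have sub : [set F i | i : 'I_n] \subset S.
  by apply/subsetP => y /imsetP[i _ ->]; case/andP: (FP i).
by have := subset_leq_card sub; rewrite card_imset // card_ord.
Qed.

Lemma card_Ygens : #|Ygens n| = n.
Proof.
rewrite /Ygens card_imset ?card_ord // => i j e.
by apply: X_inj; rewrite -!dom_ygen e.
Qed.

Lemma Ygens_sub : Ygens n \subset AM n.
Proof. by apply/subsetP => y /imsetP[i _ ->]; exact: ygen_AM. Qed.



End S.

Theorem theorem5p8 (n : nat) (hn : n %% 4 = 3) :
  generates (Ygens n) (AM n) /\ #|Ygens n| = n /\
  (forall S : {set PT n}, generates S (AM n) -> n <= #|S|).
Proof.
case: n hn => [|m] hm; first by [].
split; [split|split].
- exact: (Ygens_sub hm).
- move=> a; split; [exact: (gen_all hm) | exact: (AM_gen (Ygens_sub hm))].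
- exact: (card_Ygens hm).
- move=> S; exact: (lower hm).
Qed.
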